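(* Let $X$ be a reflexive real Banach space. Then for every nonempty closed convex subset $V$ of $X$, the triplet $(X,V,\mathcal{CB}(X))$ has weak-$\mathscr{F}_{cmc}$-SACP, where $\mathcal{CB}(X)$ is the family of all nonempty closed bounded subsets of $X$ and $\mathscr{F}_{cmc}$ is the class of all convex, monotone, coercive functions $f:\ell_\infty^+(F)\to[0,\infty)$, $F\in\mathcal{CB}(X)$.
   Context: For a nonempty closed bounded set $F\subseteq X$, $\ell_\infty^+(F)$ is the set of bounded functions $\varphi:F\to[0,\infty)$ with the coordinatewise order and sup norm $\|\varphi\|_\infty$. $f:\ell_\infty^+(F)\to[0,\infty)$ is monotone if $\varphi_1\le\varphi_2$ implies $f(\varphi_1)\le f(\varphi_2)$, and coercive if $f(\varphi)\to\infty$ as $\|\varphi\|_\infty\to\infty$. For $x\in X$, $r_f(x,F)=f((\|x-a\|)_{a\in F})$ and $\mathrm{rad}_V^f(F)=\inf_{v\in V}r_f(v,F)$. The triplet $(X,V,\mathfrak{F})$ has weak-$\mathscr{F}$-SACP if for every $F\in\mathfrak{F}$, every $f\in\mathscr{F}$ defined on $\ell_\infty^+(F)$ and every sequence $(v_n)\subseteq V$ with $r_f(v_n,F)\to\mathrm{rad}_V^f(F)$, $(v_n)$ has a weakly convergent subsequence. *)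

(* Defs.v *)
From HB Require Import structures.
From mathcomp Require Import all_boot all_order all_algebra.
From mathcomp Require Import all_classical all_reals all_analysis.
Set Implicit Arguments. Unset Strict Implicit. Unset Printing Implicit Defensive.
Import Order.TTheory GRing.Theory Num.Theory.
Import numFieldNormedType.Exports.
Local Open Scope classical_set_scope.
Local Open Scope ring_scope.

Section Defs.
Variables (R : realType) (X : normedModType R).

Definition is_clf (phi : X -> R) : Prop :=
  (forall (a : R) (x y : X), phi (a *: x + y) = a * phi x + phi y) /\
  continuous phi.

(* reflexivity: the canonical embedding X -> X^** is surjective, i.e. every
   bounded linear functional Phi on X^* is evaluation at some x.  Boundedness
   |Phi phi| <= C ||phi|| is written out via the operator norm:
   ||phi|| <= M iff |phi x| <= M ||x|| for all x. *)
Definition reflexive_space : Prop :=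
  forall Phi : (X -> R) -> R,
    (forall (a : R) (phi psi : X -> R), is_clf phi -> is_clf psi ->
        Phi (fun x => a * phi x + psi x) = a * Phi phi + Phi psi) ->
    (exists C : R, forall (phi : X -> R) (M : R), is_clf phi -> 0 <= M ->
        (forall x, `|phi x| <= M * `|x|) -> `|Phi phi| <= C * M) ->
    exists x : X, forall phi, is_clf phi -> Phi phi = phi x.

Definition weak_cvg (u : nat -> X) (x : X) : Prop :=
  forall phi, is_clf phi -> (fun n => phi (u n)) @ \oo --> phi x.

Definition convex_set_X (V : set X) : Prop :=
  forall x y (t : R), V x -> V y -> 0 <= t -> t <= 1 ->
    V (t *: x + (1 - t) *: y).

Definition linf_pos (F : set X) (phi : {a : X | F a} -> R) : Prop :=
  (forall a, 0 <= phi a) /\ (exists M : R, forall a, phi a <= M).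

Definition supnorm (F : set X) (phi : {a : X | F a} -> R) : R :=
  sup (range (fun a => `|phi a|)).

Definition F_cmc (F : set X) (f : ({a : X | F a} -> R) -> R) : Prop :=
  (forall phi, linf_pos phi -> 0 <= f phi) /\
  (forall phi1 phi2 (t : R), linf_pos phi1 -> linf_pos phi2 -> 0 <= t -> t <= 1 ->
     f (fun a => t * phi1 a + (1 - t) * phi2 a) <= t * f phi1 + (1 - t) * f phi2) /\
  (forall phi1 phi2, linf_pos phi1 -> linf_pos phi2 ->
     (forall a, phi1 a <= phi2 a) -> f phi1 <= f phi2) /\
  (forall M : R, exists K : R, forall phi, linf_pos phi ->
     K <= supnorm phi -> M <= f phi).

Definition r_f (F : set X) (f : ({a : X | F a} -> R) -> R) (x : X) : R :=
  f (fun a => `|x - sval a|).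

Definition rad (F : set X) (f : ({a : X | F a} -> R) -> R) (V : set X) : R :=
  inf [set r_f f v | v in V].

Definition weak_Fcmc_SACP (V : set X) : Prop :=
  forall F : set X, F !=set0 -> closed F -> [bounded a | a in F] ->
  forall f : ({a : X | F a} -> R) -> R, F_cmc f ->
  forall v : nat -> X, (forall n, V (v n)) ->
    (fun n => r_f f (v n)) @ \oo --> rad f V ->
    exists (sigma : nat -> nat) (x : X),
      {homo sigma : m n / (m < n)%N >-> (m < n)%N} /\ weak_cvg (v \o sigma) x.
End Defs.

(* Main.v *)
From Pilot Require Import Defs.
From mathcomp Require Import all_boot all_order all_algebra.
From mathcomp Require Import all_classical all_reals all_analysis.
From mathcomp Require Import ring lra.
Local Open Scope classical_set_scope.
Local Open Scope ring_scope.

Module Helpers.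
Set Implicit Arguments. Unset Strict Implicit. Unset Printing Implicit Defensive.
Import Order.TTheory GRing.Theory Num.Theory.
Import numFieldNormedType.Exports.
Local Open Scope classical_set_scope.
Local Open Scope ring_scope.

Section HahnBanach.
Variables (R : realType) (V : lmodType R).

Definition sublin (p : V -> R) :=
  (forall x y, p (x + y) <= p x + p y) /\ (forall a x, 0 <= a -> p (a *: x) = a * p x).
Definition lin (f : V -> R) := forall a x y, f (a *: x + y) = a * f x + f y.

Lemma sublin0 p : sublin p -> p 0 = 0.
Proof. by case=> _ h; rewrite -(scale0r 0) h // mul0r. Qed.

Lemma sublin_lb p : sublin p -> forall x, - p (- x) <= p x.
Proof.
move=> sp x; have := sp.1 x (- x); rewrite subrr (sublin0 sp).
by rewrite -lerBlDr sub0r.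
Qed.

Lemma inf_scale_le (S1 S2 : set R) a : 0 < a -> S1 !=set0 -> has_lbound S2 ->
  (forall e, S1 e -> S2 (a * e)) -> inf S2 <= a * inf S1.
Proof.
move=> a0 ne lb h; rewrite -ler_pdivrMl //.
apply: lb_le_inf => // e /h /(ge_inf lb) H.
by rewrite ler_pdivrMl.
Qed.

Definition rset (q : V -> R) z x :=
  [set q (x + t *: z) - t * q z | t in [set t : R | 0 <= t]].
Definition rfun (q : V -> R) z x := inf (rset q z x).

Section rfun.
Variables (q : V -> R) (z : V).
Hypothesis sq : sublin q.

Lemma rset_ne x : rset q z x !=set0.
Proof. exists (q (x + 0 *: z) - 0 * q z). rewrite /rset. by exists 0 => //=. Qed.

Lemma rset_lb x : lbound (rset q z x) (- q (- x)).
Proof.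
move=> _ [t t0 <-].
have h1 := sq.1 (x + t *: z) (- x); rewrite addrC addKr in h1.
have h2 := sq.2 t z t0; rewrite h2 in h1; lra.
Qed.

Lemma rset_hlb x : has_lbound (rset q z x).
Proof. by exists (- q (- x)); exact: rset_lb. Qed.

Lemma rfun_ge x : - q (- x) <= rfun q z x.
Proof. by apply: lb_le_inf; [exact: rset_ne | exact: rset_lb]. Qed.

Lemma rfun_le_elt x t : 0 <= t -> rfun q z x <= q (x + t *: z) - t * q z.
Proof. by move=> t0; apply: (ge_inf (rset_hlb x)); exists t. Qed.

Lemma rfun_le x : rfun q z x <= q x.
Proof. by have := rfun_le_elt x (lexx 0); rewrite scale0r addr0 mul0r subr0. Qed.

Lemma rfun_opp : rfun q z (- z) <= - q z.
Proof.
have := rfun_le_elt (- z) ler01; rewrite scale1r mul1r addNr (sublin0 sq).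
by rewrite sub0r.
Qed.

Lemma rfun_sublin : sublin (rfun q z).
Proof.
split.
- move=> x y; apply/ler_addgt0Pr => e e0.
  have e20 : 0 < e / 2 by rewrite divr_gt0.
  have [_ [s s0 <-] hs] := inf_adherent e20 (conj (rset_ne x) (rset_hlb x)).
  have [_ [t t0 <-] ht] := inf_adherent e20 (conj (rset_ne y) (rset_hlb y)).
  have h1 := rfun_le_elt (x + y) (addr_ge0 s0 t0).
  have h2 : q (x + y + (s + t) *: z) - (s + t) * q z <=
      (q (x + s *: z) - s * q z) + (q (y + t *: z) - t * q z).
    rewrite addrACA -opprD -mulrDl lerD2r scalerDl addrACA; exact: sq.1.
  lra.
- move=> a x; rewrite le_eqVlt => /predU1P[<-|a0].
    rewrite scale0r mul0r; apply/eqP; rewrite eq_le; apply/andP; split.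
      by have := rfun_le 0; rewrite (sublin0 sq).
    by have := rfun_ge 0; rewrite oppr0 (sublin0 sq) oppr0.
  have key b y : 0 < b -> rfun q z (b *: y) <= b * rfun q z y.
    move=> b0; apply: inf_scale_le => //; first exact: rset_ne.
      exact: rset_hlb.
    move=> _ [t t0 <-]; rewrite /rset /=; apply: (@ex_intro2 _ _ _ (b * t)); first exact: mulr_ge0 (ltW b0) t0.
    by rewrite mulrBr -(sq.2 _ _ (ltW b0)) scalerDr scalerA mulrA.
  apply/eqP; rewrite eq_le key //=.
  have := key a^-1 (a *: x); rewrite invr_gt0 scalerA mulVf ?gt_eqF // scale1r.
  by move=> /(_ a0); rewrite ler_pdivlMl.
Qed.
End rfun.

Lemma min_lin q : sublin q ->
  (forall r, sublin r -> (forall x, r x <= q x) -> r = q) -> lin q.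
Proof.
move=> sq hmin.
have qN z : q (- z) = - q z.
  have eq := hmin _ (rfun_sublin z sq) (rfun_le z sq).
  apply/eqP; rewrite eq_le; apply/andP; split.
    by rewrite -{1}eq; exact: rfun_opp.
  by rewrite lerNl; have := sublin_lb sq z.
have qD x y : q (x + y) = q x + q y.
  apply/eqP; rewrite eq_le sq.1 /=.
  have := sq.1 (x + y) (- y); rewrite addrK qN => h.
  lra.
move=> a x y; rewrite qD; congr (_ + _).
have [a0|a0] := leP 0 a; first by rewrite sq.2.
have h := sq.2 (- a) x; rewrite scaleNr qN in h.
have : 0 <= - a by rewrite oppr_ge0 ltW.
move=> /h; lra.
Qed.

Definition mset (B : set (V -> R)) x := [set g x | g in B].
Definition minf (B : set (V -> R)) x := inf (mset B x).

Section minf.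
Variable B : set (V -> R).
Hypotheses (Bne : B !=set0) (Bsub : forall g, B g -> sublin g)
  (Blb : forall x, exists l, forall g, B g -> l <= g x)
  (Bdir : forall g1 g2, B g1 -> B g2 ->
     exists2 g, B g & forall x, g x <= g1 x /\ g x <= g2 x).

Lemma mset_ne x : mset B x !=set0.
Proof. by case: Bne => g Bg; exists (g x); exists g. Qed.

Lemma mset_hlb x : has_lbound (mset B x).
Proof. by case: (Blb x) => l hl; exists l => _ [g Bg <-]; exact: hl. Qed.

Lemma minf_le g x : B g -> minf B x <= g x.
Proof. by move=> Bg; apply: (ge_inf (mset_hlb x)); exists g. Qed.

Lemma minf_sublin : sublin (minf B).
Proof.
split.
- move=> x y; apply/ler_addgt0Pr => e e0.
  have e20 : 0 < e / 2 by rewrite divr_gt0.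
  have [_ [g1 B1 <-] h1] := inf_adherent e20 (conj (mset_ne x) (mset_hlb x)).
  have [_ [g2 B2 <-] h2] := inf_adherent e20 (conj (mset_ne y) (mset_hlb y)).
  have [g Bg hg] := Bdir B1 B2.
  have h3 := minf_le (x + y) Bg.
  have h4 := (Bsub Bg).1 x y.
  have [h5 _] := hg x; have [_ h6] := hg y.
  lra.
- move=> a x; rewrite le_eqVlt => /predU1P[<-|a0].
    rewrite scale0r mul0r; apply/eqP; rewrite eq_le; apply/andP; split.
      by case: Bne => g Bg; have := minf_le 0 Bg; rewrite (sublin0 (Bsub Bg)).
    apply: lb_le_inf; first exact: mset_ne.
    by move=> _ [g Bg <-]; rewrite (sublin0 (Bsub Bg)).
  have key b y : 0 < b -> minf B (b *: y) <= b * minf B y.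
    move=> b0; apply: inf_scale_le => //; first exact: mset_ne.
      exact: mset_hlb.
    move=> _ [g Bg <-]; rewrite /mset /=; exists g => //.
    by rewrite (Bsub Bg).2 // ltW.
  apply/eqP; rewrite eq_le key //=.
  have := key a^-1 (a *: x); rewrite invr_gt0 scalerA mulVf ?gt_eqF // scale1r.
  by move=> /(_ a0); rewrite ler_pdivlMl.
Qed.
End minf.

Lemma lin0 f : lin f -> f 0 = 0.
Proof. move=> lf; have := lf 1 0 0; rewrite scale1r addr0 mul1r => h; lra. Qed.

Lemma linN f : lin f -> forall x, f (- x) = - f x.
Proof.
move=> lf x; have := lf (-1) x 0; rewrite addr0 lin0 // addr0 scaleN1r => ->.
by rewrite mulN1r.
Qed.

Theorem hahn_banach (p : V -> R) : sublin p -> forall x0,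
  exists phi, lin phi /\ (forall x, phi x <= p x) /\ phi x0 = p x0.
Proof.
move=> sp x0; pose p' := rfun p x0.
have sp' : sublin p' := rfun_sublin x0 sp.
pose P (q : V -> R) := sublin q /\ (forall x, q x <= p' x).
pose T := {q : V -> R | P q}.
pose Rel (s t : T) := `[< forall x, sval t x <= sval s x >].
have [t tmax] : exists t, forall s, Rel t s -> s = t.
  apply: (@Zorn T Rel).
  - by move=> s; apply/asboolP.
  - move=> r s t /asboolP h1 /asboolP h2; apply/asboolP => x.
    exact: le_trans (h2 x) (h1 x).
  - move=> [s Ps] [t Pt] /asboolP h1 /asboolP h2; apply: eq_exist.
    by apply: funext => x; apply/eqP; rewrite eq_le h1 h2.
  - move=> A Atot.
    pose B := [set sval s | s in A] `|` [set p'].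
    have Bsub g : B g -> P g.
      case=> [[s _ <-]|->]; first exact: (svalP s).
      by split=> //.
    have Bne : B !=set0 by exists p'; right.
    have Blb x : exists l, forall g, B g -> l <= g x.
      exists (- p' (- x)) => g /Bsub [sg gp].
      by apply: le_trans (sublin_lb sg x); rewrite lerN2.
    have Bdir g1 g2 : B g1 -> B g2 ->
        exists2 g, B g & forall x, g x <= g1 x /\ g x <= g2 x.
      move=> B1 B2.
      case: B1 => [[s1 A1 <-]|->]; last first.
        by exists g2 => // x; split => //; have [_ ] := Bsub _ B2.
      case: B2 => [[s2 A2 <-]|->]; last first.
        by exists (sval s1) => //; [left; exists s1 | move=> x; split => //; case: (svalP s1)].
      case: (Atot _ _ A1 A2) => /asboolP h.
        by exists (sval s2); [left; exists s2|].
      by exists (sval s1); [left; exists s1|].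
    have Pm : P (minf B).
      split; first exact: (minf_sublin Bne (fun g Bg => (Bsub g Bg).1) Blb Bdir).
      by move=> x; apply: (minf_le Blb); right.
    exists (exist P (minf B) Pm) => s As; apply/asboolP => x /=.
    by apply: (minf_le Blb); left; exists s.
have lt : lin (sval t).
  case: (svalP t) => st tp'.
  apply: min_lin => // r sr rt.
  have Pr : P r by split => // x; apply: le_trans (rt x) (tp' x).
  have := tmax (exist P r Pr); rewrite /Rel /= => /(_ (asboolT rt)).
  by move=> <-.
exists (sval t); split => //.
case: (svalP t) => st tp'.
have tp x : sval t x <= p x by apply: le_trans (tp' x) (rfun_le x0 sp x).
split => //.
have h1 := tp' (- x0); rewrite linN // in h1.
have h2 := rfun_opp x0 sp.
have h3 := tp x0; rewrite /p' in h1; lra.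
Qed.
End HahnBanach.

Section M1.
Variables (R : realType) (X : normedModType R).

Lemma lin_norm_bound (phi : X -> R) C : lin phi -> (forall x, phi x <= C * `|x|) ->
  forall x, `|phi x| <= C * `|x|.
Proof.
move=> lp h x; rewrite ler_norml h andbT.
by have := h (- x); rewrite linN // normrN lerNl.
Qed.

Lemma lin_sub (phi : X -> R) : lin phi -> forall x y, phi (x - y) = phi x - phi y.
Proof.
by move=> lp x y; rewrite addrC -scaleN1r lp mulN1r addrC.
Qed.

Lemma clf_of_bound (phi : X -> R) C : 0 <= C -> lin phi ->
  (forall x, phi x <= C * `|x|) -> is_clf phi.
Proof.
move=> C0 lp h; split => // x.
have hb := lin_norm_bound lp h.
apply/cvgrPdist_lt => e e0.
apply/nbhs_ballP; exists (e / (C + 1)).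
  by rewrite /= divr_gt0 // ltr_wpDl.
move=> y; rewrite -ball_normE /= => xy.
rewrite -lin_sub //; apply: (le_lt_trans (hb _)).
apply: (@le_lt_trans _ _ (C * (e / (C + 1)))).
  by rewrite ler_wpM2l // ltW.
rewrite mulrA ltr_pdivrMr ?ltr_wpDl // mulrC ltr_pM2l //; lra.
Qed.


Lemma clf_lin (phi : X -> R) : is_clf phi -> lin phi.
Proof. by case. Qed.

Lemma clf_bounded (phi : X -> R) : is_clf phi ->
  exists M, 0 <= M /\ forall x, `|phi x| <= M * `|x|.
Proof.
move=> [lp cp].
have := cp 0 => /cvgrPdist_lt /(_ 1 ltr01) /nbhs_ballP [r /= r0 hr].
exists (2 / r); split; first by rewrite divr_ge0 // ltW.
move=> x; have [->|x0] := eqVneq x 0; first by rewrite lin0 // !normr0 mulr0.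
have nx0 : 0 < `|x| by rewrite normr_gt0.
pose c := r / (2 * `|x|).
have c0 : 0 < c by rewrite divr_gt0 // mulr_gt0.
have : ball (0 : X) r (c *: x).
  rewrite -ball_normE /= sub0r normrN normrZ gtr0_norm // /c.
  have -> : r / (2 * `|x|) * `|x| = r / 2 by field; rewrite gt_eqF.
  lra.
move=> /hr; rewrite lin0 // sub0r normrN -[c *: x]addr0 lp lin0 // addr0.
rewrite normrM gtr0_norm // /c => h.
rewrite mulrAC ler_pdivlMr // mulrC.
have : r * `|phi x| < 2 * `|x|.
  move: h; rewrite mulrAC ltr_pdivrMr ?mulr_gt0 // mul1r; done.
move/ltW; rewrite mulrC; done.
Qed.

Lemma ultra_bounded_cvg (G : set_system nat) (a : nat -> R) K : UltraFilter G ->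
  G [set n | `|a n| <= K] -> exists l : R, a @ G --> l.
Proof.
move=> GU GK.
have HK : (a @ G) `[- K, K]%classic.
  apply: (@filterS _ G _ [set n | `|a n| <= K]); last exact: GK.
  by move=> n /=; rewrite in_itv /= -ler_norml.
have [l [_ cl]] := @segment_compact R (- K) K (a @ G) _ HK.
exists l => U /= nU.
have [//|hc] := in_ultra_setVsetC (a @^-1` U) GU.
have : (a @ G) (~` U) by rewrite /= -preimage_setC.
by move=> /cl /(_ nU) [y [/= ? ?]].
Qed.

Lemma lim_bound (G : set_system nat) (FG : ProperFilter G) (f : nat -> R) l c :
  f @ G --> l -> G [set n | `|f n| <= c] -> `|l| <= c.
Proof.
move=> fl Gc; rewrite leNgt; apply/negP => lc.
have e0 : 0 < `|l| - c by rewrite subr_gt0.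
have h := (cvgrPdist_lt _ _).1 fl _ e0.
have h' : G [set n | `|l - f n| < `|l| - c] := h FG.
have [n [h1 h2]] := filter_ex (@filterI _ G _ _ _ h' Gc).
have := ler_distD (f n) l 0; rewrite !subr0 => h3.
move: h1 h2 => /= h1 h2; lra.
Qed.

Lemma weak_ultra_point : reflexive_space X -> forall (u : nat -> X) B G,
  UltraFilter G -> G [set n | `|u n| <= B] ->
  exists x, forall phi, is_clf phi -> (phi \o u) @ G --> phi x.
Proof.
move=> refl u B G GU GB.
have hl phi : is_clf phi -> exists l : R, (phi \o u) @ G --> l.
  move=> cphi; have [M [M0 hM]] := clf_bounded cphi.
  apply: (@ultra_bounded_cvg G _ (M * B)) => //.
  apply: (@filterS _ G _ [set n | `|u n| <= B]) => // n /= hn.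
  by apply: le_trans (hM _) _; rewrite ler_wpM2l.
pose Phi (phi : X -> R) := lim ((phi \o u) @ G).
have cvP phi : is_clf phi -> (phi \o u) @ G --> Phi phi.
  by move=> /hl [l hl']; rewrite /Phi (cvg_lim (@Rhausdorff R) hl').
have [x hx] : exists x : X, forall phi, is_clf phi -> Phi phi = phi x.
  apply: refl.
  - move=> a phi psi cphi cpsi.
    have h : (fun n => a * phi (u n) + psi (u n)) @ G --> a * Phi phi + Phi psi.
      apply: cvgD; last exact: cvP.
      by apply: cvgM; [exact: cvg_cst | exact: cvP].
    exact: (cvg_lim (@Rhausdorff R) h).
  - exists `|B| => phi M cphi M0 hM.
    apply: (lim_bound _ (cvP _ cphi)).
    apply: (@filterS _ G _ [set n | `|u n| <= B]) => // n /= hn.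
    apply: le_trans (hM _) _; rewrite mulrC ler_wpM2r //.
    exact: le_trans hn (ler_norm _).
by exists x => phi cphi; rewrite -hx //; exact: cvP.
Qed.

End M1.

Lemma extract (P : nat -> nat -> Prop) : (forall k m, exists n, (m <= n)%N /\ P k n) ->
  exists tau : nat -> nat, {homo tau : m n / (m < n)%N >-> (m < n)%N} /\ forall k, P k (tau k).
Proof.
move=> h.
have [f hf] := @choice _ _ (fun (p : nat * nat) n => (p.2 <= n)%N /\ P p.1 n)
  (fun p => h p.1 p.2).
pose tau := fix t k := match k with 0 => f (0, 0)%N | k'.+1 => f (k'.+1, (t k').+1) end.
exists tau; split.
  apply: homo_ltn; first by move=> y x z; apply: ltn_trans.
  by move=> i; exact: (hf (i.+1, (tau i).+1)).1.
by case=> [|k]; [exact: (hf (0, 0)%N).2 | exact: (hf (k.+1, (tau k).+1)).2].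
Qed.

Lemma homo_geq (tau : nat -> nat) : {homo tau : m n / (m < n)%N >-> (m < n)%N} ->
  forall n, (n <= tau n)%N.
Proof.
move=> h; elim=> [//|n ih]; apply: leq_ltn_trans ih _; exact: h.
Qed.

Section Span.
Variables (R : realType) (X : normedModType R) (u : nat -> X).

Definition Sp : set X := [set s | exists n (a : nat -> R), s = \sum_(0 <= i < n) a i *: u i].
Definition code := (nat * seq int)%type.
Definition ycode (c : code) : X :=
  (c.1.+1%:R)^-1 *: \sum_(0 <= i < size c.2) ((nth 0 c.2 i)%:~R : R) *: u i.

Lemma Sp_widen n N (a : nat -> R) : (n <= N)%N ->
  \sum_(0 <= i < n) a i *: u i = \sum_(0 <= i < N) (if (i < n)%N then a i else 0) *: u i.
Proof.
move=> h; rewrite (big_nat_widen 0 n N xpredT _ h) big_mkcond /=.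
by apply: eq_bigr => i _; case: ifP => _; rewrite ?scale0r.
Qed.

Lemma Sp0 : Sp 0.
Proof. by exists 0%N, (fun _ => 0); rewrite big_geq. Qed.

Lemma Sp_add s1 s2 : Sp s1 -> Sp s2 -> Sp (s1 + s2).
Proof.
move=> [n1 [a1 ->]] [n2 [a2 ->]].
exists (maxn n1 n2), (fun i => (if (i < n1)%N then a1 i else 0) + (if (i < n2)%N then a2 i else 0)).
rewrite (Sp_widen a1 (leq_maxl n1 n2)) (Sp_widen a2 (leq_maxr n1 n2)) -big_split /=.
by apply: eq_bigr => i _; rewrite scalerDl.
Qed.

Lemma Sp_scale b s : Sp s -> Sp (b *: s).
Proof.
move=> [n [a ->]]; exists n, (fun i => b * a i).
by rewrite scaler_sumr; apply: eq_bigr => i _; rewrite scalerA.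
Qed.

Lemma Sp_u n : Sp (u n).
Proof.
exists n.+1, (fun i => if i == n then 1 else 0).
rewrite big_nat_recr //= eqxx scale1r big1_seq ?add0r // => i /andP[_].
rewrite mem_index_iota => /andP[_ hi]; rewrite ifF ?scale0r //.
by apply/negbTE; rewrite neq_ltn hi.
Qed.

Lemma Sp_approx s e : Sp s -> 0 < e -> exists c, `|s - ycode c| < e.
Proof.
move=> [n [a ->]] e0.
pose C := \sum_(0 <= i < n) `|u i|.
have C0 : 0 <= C by apply: sumr_ge0 => i _.
pose N := Num.trunc (C / e).
pose k := [seq Num.floor (a i * N.+1%:R) | i <- iota 0 n].
exists (N, k); rewrite /ycode /= size_map size_iota.
have N0 : 0 < N.+1%:R :> R by rewrite ltr0n.
rewrite scaler_sumr -sumrB.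
rewrite (eq_big_nat _ _ (F2 := fun i => (a i - (Num.floor (a i * N.+1%:R))%:~R / N.+1%:R) *: u i)); last first.
  move=> i /andP[_ hi].
  rewrite (nth_map 0%N) ?size_iota // nth_iota // add0n scalerA -scalerBl.
  by rewrite mulrC.
apply: (le_lt_trans (ler_norm_sum _ _ _)).
apply: (@le_lt_trans _ _ (\sum_(0 <= i < n) (N.+1%:R)^-1 * `|u i|)).
  apply: ler_sum => i _; rewrite normrZ ler_wpM2r //.
  set t := a i * N.+1%:R.
  have [h1 h2] := andP (floor_itv t).
  have -> : a i = t / N.+1%:R by rewrite /t mulfK // gt_eqF.
  rewrite -mulrBl normrM.
  have -> : `|N.+1%:R^-1| = N.+1%:R^-1 :> R by rewrite gtr0_norm ?invr_gt0.
  have -> : `|t - (Num.floor t)%:~R| = t - (Num.floor t)%:~R by rewrite ger0_norm ?subr_ge0.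
  rewrite ler_piMl ?invr_ge0 ?ltW //.
  move: h2; rewrite intrD; lra.
rewrite -mulr_sumr -/C mulrC ltr_pdivrMr //.
have := truncnS_gt (C / e); rewrite -/N => h.
by move: h; rewrite ltr_pdivrMr // mulrC.
Qed.

Definition pset (z : X) := [set `|z - s| | s in Sp].
Definition pdist (z : X) := inf (pset z).

Lemma pset_ne z : pset z !=set0.
Proof. by exists `|z - 0|; exists 0 => //; exact: Sp0. Qed.

Lemma pset_hlb z : has_lbound (pset z).
Proof. by exists 0 => _ [s _ <-]. Qed.

Lemma pdist_ge0 z : 0 <= pdist z.
Proof. by apply: lb_le_inf; [exact: pset_ne | move=> _ [s _ <-]]. Qed.

Lemma pdist_le_elt z s : Sp s -> pdist z <= `|z - s|.
Proof. by move=> hs; apply: (ge_inf (pset_hlb z)); exists s. Qed.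

Lemma pdist_le z : pdist z <= `|z|.
Proof. by have := pdist_le_elt z Sp0; rewrite subr0. Qed.

Lemma pdist_sublin : sublin pdist.
Proof.
split.
- move=> x y; apply/ler_addgt0Pr => e e0.
  have e20 : 0 < e / 2 by rewrite divr_gt0.
  have [_ [s1 S1 <-] h1] := inf_adherent e20 (conj (pset_ne x) (pset_hlb x)).
  have [_ [s2 S2 <-] h2] := inf_adherent e20 (conj (pset_ne y) (pset_hlb y)).
  have h3 := pdist_le_elt (x + y) (Sp_add S1 S2).
  have h4 : `|x + y - (s1 + s2)| <= `|x - s1| + `|y - s2|.
    by rewrite opprD addrACA; exact: ler_normD.
  rewrite -/(pdist x) -/(pdist y) in h1 h2.
  lra.
- move=> a x; rewrite le_eqVlt => /predU1P[<-|a0].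
    rewrite scale0r mul0r; apply/eqP; rewrite eq_le pdist_ge0 andbT.
    by have := pdist_le 0; rewrite normr0.
  have key b y : 0 < b -> pdist (b *: y) <= b * pdist y.
    move=> b0; apply: inf_scale_le => //; first exact: pset_ne.
      exact: pset_hlb.
    move=> _ [s Ss <-]; rewrite /pset; exists (b *: s); first exact: Sp_scale.
    by rewrite -scalerBr normrZ gtr0_norm.
  apply/eqP; rewrite eq_le key //=.
  have := key a^-1 (a *: x); rewrite invr_gt0 scalerA mulVf ?gt_eqF // scale1r.
  by move=> /(_ a0); rewrite ler_pdivlMl.
Qed.

Lemma norming (psi : code -> X -> R) :
  (forall c, lin (psi c) /\ (forall x, psi c x <= `|x|) /\ psi c (ycode c) = `|ycode c|) ->
  forall d, (forall c, psi c d = 0) ->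
  (forall chi, is_clf chi -> (forall n, chi (u n) = 0) -> chi d = 0) -> d = 0.
Proof.
move=> hpsi d hd hchi.
have [chi [lchi [chip chid]]] := hahn_banach pdist_sublin d.
have cchi : is_clf chi.
  apply: (@clf_of_bound _ _ _ 1 ler01 lchi) => x.
  by rewrite mul1r; apply: le_trans (chip x) (pdist_le x).
have pd0 : pdist d = 0.
  rewrite -chid; apply: hchi => // n.
  have h1 : chi (u n) <= 0.
    by apply: le_trans (chip _) _; have := pdist_le_elt (u n) (Sp_u n); rewrite subrr normr0.
  have h2 : chi (- u n) <= 0.
    apply: le_trans (chip _) _; have := pdist_le_elt (- u n) (Sp_scale (-1) (Sp_u n)).
    by rewrite scaleN1r subrr normr0.
  rewrite linN // in h2; lra.
apply/eqP; rewrite -normr_eq0 eq_le normr_ge0 andbT.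
apply/ler_addgt0Pr => e e0; rewrite add0r.
have e40 : 0 < e / 4 by rewrite divr_gt0.
have [_ [s Ss <-] hs] := inf_adherent e40 (conj (pset_ne d) (pset_hlb d)).
rewrite -/(pdist d) pd0 add0r in hs.
have [c hc] := Sp_approx Ss e40.
have [lc [pc yc]] := hpsi c.
have hy : `|ycode c| <= `|ycode c - d|.
  by rewrite -yc -[psi c (ycode c)]subr0 -(hd c) -lin_sub.
have t1 := ler_distD s (ycode c) d.
have t2 := ler_distD (ycode c) d 0.
rewrite !subr0 in t2.
have t3 := distrC (ycode c) d.
have t4 := distrC (ycode c) s.
have t5 := distrC d s.
lra.
Qed.
End Span.

Section M3.
Variables (R : realType) (X : normedModType R).

Lemma norm_sublin : sublin (fun x : X => `|x|).
Proof.
split; first exact: ler_normD.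
by move=> a x a0; rewrite normrZ ger0_norm.
Qed.

Lemma Gall (G : set_system nat) (FG : Filter G) (P : nat -> set nat) k :
  (forall j, G (P j)) -> G [set n | forall j, (j <= k)%N -> P j n].
Proof.
move=> hP; elim: k => [|k ih].
  by apply: filterS (hP 0%N) => n h j; rewrite leqn0 => /eqP ->.
apply: filterS (filterI ih (hP k.+1)) => n [h1 h2] j.
by rewrite leq_eqVlt => /predU1P[->//|]; rewrite ltnS; exact: h1.
Qed.

Lemma subseq_cvg (f : nat -> R) (tau : nat -> nat) (l : R) :
  {homo tau : m n / (m < n)%N >-> (m < n)%N} ->
  f @ \oo --> l -> (f \o tau) @ \oo --> l.
Proof.
move=> ht fl U /fl [N _ hN]; exists N => // n /= hn.
apply: hN => /=; apply: leq_trans hn (homo_geq ht n).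
Qed.

Lemma finer_unique (G : set_system nat) (FG : ProperFilter G) (f : nat -> R) (l l' : R) :
  \oo `<=` G -> f @ \oo --> l -> f @ G --> l' -> l' = l.
Proof.
move=> sG h1 h2; have h3 : f @ G --> l by move=> U /h1 /sG.
exact: (cvg_unique (@Rhausdorff R) h2 h3).
Qed.

Lemma bounded_weak_subseq : reflexive_space X -> forall (u : nat -> X) B N0,
  (forall n, (N0 <= n)%N -> `|u n| <= B) ->
  exists (sigma : nat -> nat) (x : X),
    {homo sigma : m n / (m < n)%N >-> (m < n)%N} /\ weak_cvg (u \o sigma) x.
Proof.
move=> refl u B N0 hB.
have [G [GU sG]] := @ultraFilterLemma nat \oo _.
have GB : G [set n | `|u n| <= B] by apply: sG; exists N0.
have [x hx] := weak_ultra_point refl GU GB.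
have /choice [psi hpsi] : forall c : code, exists f : X -> R,
    lin f /\ (forall y, f y <= `|y|) /\ f (ycode u c) = `|ycode u c|.
  move=> c; exact: (hahn_banach (@norm_sublin) (ycode u c)).
pose psij (j : nat) : X -> R := if unpickle j is Some c then psi c else (fun _ => 0).
have cpsij j : is_clf (psij j).
  rewrite /psij; case: (unpickle j) => [c|].
    have [lc [pc _]] := hpsi c.
    by apply: (@clf_of_bound _ _ _ 1 ler01 lc) => y; rewrite mul1r.
  apply: (@clf_of_bound _ _ _ 0 (lexx 0)) => [a y z|y]; first by rewrite mulr0 addr0.
  by rewrite mul0r.
have Aset : forall k m, exists n, (m <= n)%N /\
    forall j, (j <= k)%N -> `|psij j x - psij j (u n)| < k.+1%:R^-1.
  move=> k m.
  have hG j : G [set n | `|psij j x - psij j (u n)| < k.+1%:R^-1].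
    have := (cvgrPdist_lt _ _).1 (hx _ (cpsij j)) (k.+1%:R^-1) _.
    by move=> /(_ _ _) h; apply: h; rewrite invr_gt0 ltr0n.
  have Gm : G [set n | (m <= n)%N] by apply: sG; exists m.
  have [n [h1 h2]] := filter_ex (filterI Gm (Gall _ k hG)).
  by exists n.
have [sigma [hs hsig]] := extract Aset.
exists sigma, x; split => //.
have conv_psi j : (psij j \o (u \o sigma)) @ \oo --> psij j x.
  apply/cvgrPdist_lt => e e0.
  have [N1 hN1] : exists N1 : nat, e^-1 < N1%:R.
    by exists (Num.trunc (e^-1)).+1; exact: truncnS_gt.
  exists (maxn j N1) => // n /= hn.
  apply: lt_le_trans (hsig n j _) _; first exact: leq_trans (leq_maxl _ _) hn.
  have hn1 : (N1 <= n)%N by apply: leq_trans (leq_maxr _ _) hn.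
  have : e^-1 < n.+1%:R.
    apply: lt_le_trans hN1 _; rewrite ler_nat; exact: leq_trans hn1 (leqnSn n).
  rewrite -[X in X < _ -> _]div1r ltr_pdivrMr // => h.
  by rewrite -div1r ler_pdivrMr ?ltr0n // ltW // mulrC.
move=> phi cphi; apply: contrapT => hnc.
have [e [e0 hinf]] : exists e : R, 0 < e /\
    forall m, exists n, (m <= n)%N /\ e <= `|phi x - phi (u (sigma n))|.
  apply: contrapT => hH; apply: hnc; apply/cvgrPdist_lt => e e0.
  apply: contrapT => hne; apply: hH; exists e; split => // m.
  apply: contrapT => hm; apply: hne; exists m => // n /= hmn.
  rewrite ltNge; apply/negP => he; apply: hm; exists n; split => //.
have [tau [ht htau]] := extract (fun k m => hinf m).
pose st := sigma \o tau.
have hst : {homo st : m n / (m < n)%N >-> (m < n)%N}.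
  by move=> m n mn; apply: hs; apply: ht.
have hB' : forall n, (N0 <= n)%N -> `|(u \o st) n| <= B.
  by move=> n hn; apply: hB; apply: leq_trans hn (homo_geq hst n).
have [G' [GU' sG']] := @ultraFilterLemma nat \oo _.
have GB' : G' [set n | `|(u \o st) n| <= B] by apply: sG'; exists N0.
have [x' hx'] := weak_ultra_point refl GU' GB'.
have eqpsi j : psij j x' = psij j x.
  apply: (@finer_unique G' _ (psij j \o (u \o st))) => //.
    exact: (subseq_cvg ht (conv_psi j)).
  exact: hx'.
have chi0 chi : is_clf chi -> (forall n, chi (u n) = 0) -> chi x' = chi x.
  move=> cchi h0.
  have e1 : chi x' = 0.
    apply: (@finer_unique G' _ (chi \o (u \o st))) => //; last exact: hx'.
    have -> : chi \o (u \o st) = (fun _ => 0) by apply: funext => n /=; rewrite h0.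
    exact: cvg_cst.
  have e2 : chi x = 0.
    apply: (@finer_unique G _ (chi \o u)) => //; last exact: hx.
    have -> : chi \o u = (fun _ => 0) by apply: funext => n /=; rewrite h0.
    exact: cvg_cst.
  by rewrite e1 e2.
have d0 : x' - x = 0.
  apply: (norming hpsi).
    move=> c; have [lc _] := hpsi c; rewrite lin_sub //.
    have := eqpsi (pickle c); rewrite /psij pickleK => ->; exact: subrr.
  move=> chi cchi h0; rewrite lin_sub; last exact: clf_lin.
  by rewrite chi0 // subrr.
have xx : x' = x by apply/eqP; rewrite -subr_eq0 d0.
have := (cvgrPdist_lt _ _).1 (hx' _ cphi) e e0.
move=> /(_ (ultra_proper)) h.
have [n /= hn] := filter_ex h.
have := htau n; rewrite -xx; lra.
Qed.

End M3.

End Helpers.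
Import Helpers.
Import Order.TTheory GRing.Theory Num.Theory.
Import numFieldNormedType.Exports.

Theorem theorem2p3 (R : realType) (X : completeNormedModType R) :
  reflexive_space X ->
  forall V : set X, V !=set0 -> closed V -> convex_set_X V ->
  weak_Fcmc_SACP V.
Proof.
move=> refl V _ _ _ F [a0 Fa0] _ Fbd f [f0 [_ [_ fcoer]]] v Vv hconv.
have [MF hMF] : exists MF : R, forall a, F a -> `|a| <= MF.
  case: Fbd => M0 [_ hM0]; exists (M0 + 1) => a Fa.
  by apply: (hM0 (M0 + 1)) => //; rewrite ltrDl.
have [K hK] := fcoer (Pilot.Defs.rad f V + 1).
have [N0 _ hN0] : \forall n \near \oo, `|Pilot.Defs.rad f V - r_f f (v n)| < 1.
  by apply: ((cvgrPdist_lt _ _).1 hconv); exact: ltr01.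
pose a0' := exist F a0 Fa0.
apply: (@bounded_weak_subseq R X refl v (`|K| + `|a0|) N0) => n hn.
rewrite leNgt; apply/negP => hvn.
have lp : linf_pos (fun a : {a : X | F a} => `|v n - sval a|).
  split => [a|]; first exact: normr_ge0.
  exists (`|v n| + MF) => a; apply: le_trans (ler_normB _ _) _.
  by rewrite lerD2l; apply: hMF; exact: (svalP a).
have hsup : `|v n - a0| <= supnorm (fun a : {a : X | F a} => `|v n - sval a|).
  apply: sup_upper_bound; last by exists a0' => //=; rewrite normr_id.
  split; first by exists (`| `|v n - a0| |), a0'.
  exists (`|v n| + MF) => _ [a _ <-]; rewrite normr_id.
  apply: le_trans (ler_normB _ _) _.
  by rewrite lerD2l; apply: hMF; exact: (svalP a).
have hK' : K <= supnorm (fun a : {a : X | F a} => `|v n - sval a|).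
  apply: le_trans hsup; apply: le_trans (ler_norm K) _.
  have := ler_distD a0 (v n) 0; rewrite !subr0.
  move: hvn; lra.
have := hK _ lp hK'.
have := hN0 n hn; rewrite /r_f /=.
have := ler_norm (f (fun a : {a : X | F a} => `|v n - sval a|) - Pilot.Defs.rad f V).
rewrite distrC; lra.
Qed.
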